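(* If $\mathbf{A}\in\mathbb{R}^{n_1\times r}$ and $\mathbf{B}\in\mathbb{R}^{n_2\times r}$, then $\mu(\mathbf{A}\odot\mathbf{B})\le\mu(\mathbf{A})\mu(\mathbf{B})r$.
   Context: For an $n\times r$ matrix $\mathbf{M}$, its coherence is $\mu(\mathbf{M})=\frac{n}{r}\max_{i\in[n]}\|\mathrm{proj}_{\mathrm{col}(\mathbf{M})}\mathbf{e}_i\|_2^2$, where $r$ is the number of columns, $\mathrm{col}(\mathbf{M})$ the column space and $\mathbf{e}_i$ the $i$-th standard basis vector. The Khatri–Rao product $\mathbf{A}\odot\mathbf{B}\in\mathbb{R}^{n_1n_2\times r}$ is the matrix whose $\ell$-th column is the Kronecker product $\mathbf{A}_{:,\ell}\otimes\mathbf{B}_{:,\ell}$. *)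

(* Defs.v *)
From HB Require Import structures.
From mathcomp Require Import all_boot all_order all_algebra.
From mathcomp Require Import reals.
From Stdlib Require Import ClassicalEpsilon.
Set Implicit Arguments. Unset Strict Implicit. Unset Printing Implicit Defensive.
Import Order.TTheory GRing.Theory Num.Theory.
Local Open Scope ring_scope.

Section Defs.
Variable R : realType.

Definition is_proj_col (n r : nat) (M : 'M[R]_(n, r)) (v p : 'cV[R]_n) : Prop :=
  (p^T <= M^T)%MS /\ M^T *m (v - p) = 0.

(* proj_{col(M)} v (exists and is unique; chosen by choice) *)
Definition proj_col (n r : nat) (M : 'M[R]_(n, r)) (v : 'cV[R]_n) : 'cV[R]_n :=
  epsilon (inhabits 0) (is_proj_col M v).

Definition sqnorm (n : nat) (v : 'cV[R]_n) : R := \sum_(i < n) v i 0 ^+ 2.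

Definition e_vec (n : nat) (i : 'I_n) : 'cV[R]_n := delta_mx i 0.

Definition coherence (n r : nat) (M : 'M[R]_(n, r)) : R :=
  n%:R / r%:R * \big[Num.max/0]_(i < n) sqnorm (proj_col M (e_vec i)).

(* Khatri-Rao product: column l is A_{:,l} (Kronecker) B_{:,l}; the row index
   (i, j) is encoded row-major as mxvec_index i j, i.e. value i * n2 + j. *)
Definition khatri_rao (n1 n2 r : nat) (A : 'M[R]_(n1, r)) (B : 'M[R]_(n2, r))
  : 'M[R]_(n1 * n2, r) :=
  \matrix_(k, l)
    (let ij := enum_val (cast_ord (esym (mxvec_cast n1 n2)) k) in
     A ij.1 l * B ij.2 l).
End Defs.

(* Main.v *)
Require Import Defs.
From HB Require Import structures.
From mathcomp Require Import all_boot all_order all_algebra.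
From mathcomp Require Import reals.
From Stdlib Require Import ClassicalEpsilon.
From mathcomp Require Import ring lra.
Set Implicit Arguments. Unset Strict Implicit.
Import Order.TTheory GRing.Theory Num.Theory.
Local Open Scope ring_scope.

Section H.
Variable R : realType.

Definition dec n1 n2 (k : 'I_(n1 * n2)) : 'I_n1 * 'I_n2 :=
  enum_val (cast_ord (esym (mxvec_cast n1 n2)) k).

Arguments dec {n1 n2}.
Lemma sum_dec n1 n2 (F : 'I_n1 * 'I_n2 -> R) :
  \sum_(k < n1 * n2) F (dec k) = \sum_x F x.
Proof.
rewrite [RHS](big_enum_val (A := predT)) /=.
rewrite [RHS](reindex (cast_ord (esym (mxvec_cast n1 n2)))) //.
exists (cast_ord (mxvec_cast n1 n2)) => i _; [exact: cast_ordKV | exact: cast_ordK].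
Qed.

Definition dot n (u v : 'cV[R]_n) : R := \sum_i u i 0 * v i 0.

Arguments dot {n}.
Lemma proj_exists n r (M : 'M[R]_(n, r)) v : exists p, is_proj_col M v p.
Proof.
set U := M^T; set V := kermx M.
have cap0 : forall x : 'rV[R]_n, (x <= U)%MS -> (x <= V)%MS -> x = 0.
  move=> x /submxP [D xD] /sub_kermxP xM.
  have : (x *m x^T) 0 0 = 0.
    by rewrite [X in _ *m X^T]xD trmx_mul /U trmxK mulmxA xM mul0mx mxE.
  rewrite !mxE => /psumr_eq0P H.
  apply/rowP => i; rewrite [RHS]mxE.
  apply/eqP; rewrite -sqrf_eq0 expr2; apply/eqP.
  have := H _ i isT; rewrite mxE; apply.
  by move=> j _; rewrite mxE -expr2 sqr_ge0.
have rc : \rank (U :&: V)%MS = 0%N.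
  apply/eqP; rewrite mxrank_eq0; apply/eqP/row_matrixP => i.
  rewrite row0; apply: cap0.
  - exact: submx_trans (row_sub i _) (capmxSl _ _).
  - exact: submx_trans (row_sub i _) (capmxSr _ _).
have full : row_full (U + V)%MS.
  rewrite /row_full; apply/eqP.
  have := mxrank_sum_cap U V; rewrite rc addn0 => ->.
  by rewrite /U /V mxrank_tr mxrank_ker subnKC // rank_leq_row.
have /sub_addsmxP [[u1 u2] /= Hv] := submx_full v^T full.
exists (u1 *m U)^T; split; first by rewrite trmxK submxMl.
apply: trmx_inj; rewrite trmx0 trmx_mul trmxK linearB /= trmxK Hv.
by rewrite addrC addKr /V -mulmxA mulmx_ker mulmx0.
Qed.


Lemma proj_spec n r (M : 'M[R]_(n, r)) v : is_proj_col M v (proj_col M v).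
Proof. rewrite /proj_col; apply: epsilon_spec; exact: proj_exists. Qed.

Lemma dotBr n (u v w : 'cV[R]_n) : dot u (v - w) = dot u v - dot u w.
Proof. rewrite /dot -sumrB; apply: eq_bigr => i _; by rewrite !mxE mulrBr. Qed.

Lemma proj_orth n r (M : 'M[R]_(n, r)) v p :
  is_proj_col M v p -> forall l, dot (col l M) p = dot (col l M) v.
Proof.
move=> [_ H] l; apply/eqP; rewrite eq_sym -subr_eq0 -dotBr; apply/eqP.
have := congr1 (fun X : 'M[R]_(r,1) => X l 0) H; rewrite !mxE => <-.
by apply: eq_bigr => i _; rewrite !mxE.
Qed.

Lemma proj_in n r (M : 'M[R]_(n, r)) v p :
  is_proj_col M v p -> exists d : 'cV_r, p = M *m d.
Proof.
move=> [/submxP [D HD] _]; exists D^T.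
by rewrite -[p]trmxK HD trmx_mul trmxK.
Qed.

Lemma dot_in_orth n r (M : 'M[R]_(n, r)) (d : 'cV_r) w :
  (forall l, dot (col l M) w = 0) -> dot (M *m d) w = 0.
Proof.
move=> H; rewrite /dot.
transitivity (\sum_l d l 0 * dot (col l M) w).
  rewrite /dot; under eq_bigr do rewrite mxE big_distrl /=.
  rewrite exchange_big /=; apply: eq_bigr => l _; rewrite big_distrr /=.
  by apply: eq_bigr => i _; rewrite !mxE mulrA [d l 0 * _]mulrC.
by apply: big1 => l _; rewrite H mulr0.
Qed.

Lemma sqnorm_ge0 n (u : 'cV[R]_n) : 0 <= sqnorm u.
Proof. by apply: sumr_ge0 => i _; rewrite sqr_ge0. Qed.

Lemma pyth n (u w : 'cV[R]_n) : dot u w = 0 -> sqnorm u <= sqnorm (u + w).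
Proof.
move=> H.
have -> : sqnorm (u + w) = sqnorm u + dot u w *+ 2 + sqnorm w.
  rewrite /sqnorm /dot; under eq_bigr do rewrite mxE sqrrD.
    by rewrite !big_split /= mulr2n.
move: H; rewrite /dot => ->; rewrite mul0rn addr0 lerDl; exact: sqnorm_ge0.
Qed.

Lemma dot_e n (u : 'cV[R]_n) k : dot u (e_vec R k) = u k 0.
Proof.
rewrite /dot (bigD1 k) //= big1 ?addr0.
  by rewrite /e_vec mxE !eqxx mulr1.
by move=> i /negbTE ik; rewrite /e_vec mxE ik mulr0.
Qed.


Lemma kr_bound n1 n2 r (A : 'M[R]_(n1, r)) (B : 'M[R]_(n2, r)) (k : 'I_(n1 * n2)) :
  sqnorm (proj_col (khatri_rao A B) (e_vec R k)) <=
  sqnorm (proj_col A (e_vec R (dec k).1)) * sqnorm (proj_col B (e_vec R (dec k).2)).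
Proof.
have Kkl : forall k' l, khatri_rao A B k' l = A (dec k').1 l * B (dec k').2 l.
  by move=> k' l; rewrite mxE.
have sumsplit : forall F : 'I_n1 -> 'I_n2 -> R,
    \sum_k' F (dec k').1 (dec k').2 = \sum_a \sum_b F a b.
  by move=> F; rewrite (@sum_dec n1 n2 (fun x => F x.1 x.2)) pair_bigA.
set K := khatri_rao A B.
set i := (dec k).1; set j := (dec k).2.
set pa := proj_col A _; set pb := proj_col B _.
set pK := proj_col K _.
set e := e_vec R k.
pose q : 'cV[R]_(n1 * n2) := \col_k' (pa (dec k').1 0 * pb (dec k').2 0).
have hA : forall l, \sum_a A a l * pa a 0 = A i l.
  move=> l; have := proj_orth (proj_spec A (e_vec R i)) l.
  rewrite dot_e mxE => <-; by apply: eq_bigr => a _; rewrite mxE.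
have hB : forall l, \sum_b B b l * pb b 0 = B j l.
  move=> l; have := proj_orth (proj_spec B (e_vec R j)) l.
  rewrite dot_e mxE => <-; by apply: eq_bigr => a _; rewrite mxE.
have orthq : forall l, dot (col l K) (e - q) = 0.
  move=> l; rewrite dotBr dot_e; apply/eqP; rewrite subr_eq0; apply/eqP.
  rewrite /dot; under eq_bigr do rewrite [col l K _ 0]mxE Kkl mxE.
  rewrite (sumsplit (fun a b => A a l * B b l * (pa a 0 * pb b 0))).
  rewrite mxE Kkl -hA -hB big_distrlr /=.
  by apply: eq_bigr => a _; apply: eq_bigr => b _; rewrite mulrACA.
have [d Hd] : exists d, pK = K *m d := proj_in (proj_spec K e).
have orthK : forall l, dot (col l K) (e - pK) = 0.
  by move=> l; rewrite dotBr (proj_orth (proj_spec K e)) subrr.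
have H0 : dot pK (q - pK) = 0.
  rewrite Hd; apply: dot_in_orth => l.
  have -> : q - K *m d = (e - K *m d) - (e - q).
    by rewrite opprB [RHS]addrC addrA subrK.
  by rewrite dotBr -Hd orthK orthq subrr.
have := pyth H0; rewrite addrC subrK => /le_trans; apply.
rewrite /sqnorm; under eq_bigr do rewrite mxE exprMn.
rewrite (sumsplit (fun a b => pa a 0 ^+ 2 * pb b 0 ^+ 2)) big_distrlr /=.
done.
Qed.

End H.

Unset Implicit Arguments. Set Strict Implicit.
Theorem lemma2 (R : realType) (n1 n2 r : nat)
  (A : 'M[R]_(n1, r)) (B : 'M[R]_(n2, r)) :
  coherence (khatri_rao A B) <= coherence A * coherence B * r%:R.
Proof.
rewrite /coherence.
set mA := \big[Num.max/0]_(i < n1) _.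
set mB := \big[Num.max/0]_(i < n2) _.
set mK := \big[Num.max/0]_(i < n1 * n2) _.
have mA0 : 0 <= mA.
  apply: (big_ind (fun x => 0 <= x)) => // [x y hx hy|i _]; last exact: sqnorm_ge0.
  by rewrite /Num.max /Order.max; case: ifP.
have mB0 : 0 <= mB.
  apply: (big_ind (fun x => 0 <= x)) => // [x y hx hy|i _]; last exact: sqnorm_ge0.
  by rewrite /Num.max /Order.max; case: ifP.
have mKle : mK <= mA * mB.
  apply: bigmax_le => [|k _]; first exact: mulr_ge0.
  apply: le_trans (kr_bound A B k) _.
  apply: ler_pM; rewrite ?sqnorm_ge0 //.
    exact: (le_bigmax _ (fun i => sqnorm (proj_col A (e_vec R i)))).
  exact: (le_bigmax _ (fun i => sqnorm (proj_col B (e_vec R i)))).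
have [->|r0] := eqVneq r 0%N.
  by rewrite invr0 !mulr0 mul0r.
have rR : (r%:R : R) != 0 by rewrite pnatr_eq0.
have -> : n1%:R / r%:R * mA * (n2%:R / r%:R * mB) * r%:R
        = (n1 * n2)%:R / r%:R * (mA * mB) :> R.
  by rewrite natrM; field.
apply: ler_wpM2l => //.
by rewrite divr_ge0 ?ler0n.
Qed.
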